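(* Let $G$ be a multigraph without self-loops whose vertex set is partitioned into three disjoint sets $\{s,t\}$, $\mathcal A$, $\mathcal B$ (with $s\ne t$) such that: the subgraph induced by $\mathcal A\cup\mathcal B$ is connected; each of $s,t$ has at least one incident edge connecting to $\mathcal A$, and each vertex of $\mathcal A$ has at least one incident edge connecting to $\{s,t\}$; and each vertex of $\mathcal B$ has at least 2 distinct neighbors in $\mathcal A$. Then $G$ admits an $(s,t)$-bipolar orientation.
   Context: $G$ admits an $(s,t)$-bipolar orientation if its edges can be directed so that there are no directed cycles, $s$ is the unique source (vertex with no incoming edges), and $t$ is the unique sink (vertex with no outgoing edges). *)

(* Defs.v *)
From mathcomp Require Import all_boot.
Set Implicit Arguments. Unset Strict Implicit. Unset Printing Implicit Defensive.

(* A finite multigraph: vertex type V, edge type E, each edge e has two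
   endpoints end1 e, end2 e (parallel edges allowed, since E is arbitrary). *)
Section Multigraph.
Variables (V E : finType) (end1 end2 : E -> V).

Definition loopless : Prop := forall e : E, end1 e != end2 e.

Definition joins (e : E) (x y : V) : bool :=
  ((end1 e == x) && (end2 e == y)) || ((end1 e == y) && (end2 e == x)).

Definition adjacent (x y : V) : bool := [exists e, joins e x y].

Definition induced_adj (S : {set V}) : rel V :=
  fun x y => [&& x \in S, y \in S & adjacent x y].

Definition induced_connected (S : {set V}) : Prop :=
  forall x y, x \in S -> y \in S -> connect (induced_adj S) x y.

Definition tail (o : E -> bool) (e : E) : V := if o e then end1 e else end2 e.
Definition head (o : E -> bool) (e : E) : V := if o e then end2 e else end1 e.

Definition arc (o : E -> bool) : rel V :=
  fun x y => [exists e, (tail o e == x) && (head o e == y)].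

Definition acyclic_orient (o : E -> bool) : Prop :=
  forall x y, arc o x y -> ~~ connect (arc o) y x.

Definition is_source (o : E -> bool) (v : V) : Prop := forall e, head o e != v.
Definition is_sink (o : E -> bool) (v : V) : Prop := forall e, tail o e != v.

Definition bipolar_orientation (s t : V) (o : E -> bool) : Prop :=
  [/\ acyclic_orient o,
      is_source o s, (forall v, is_source o v -> v = s),
      is_sink o t & (forall v, is_sink o v -> v = t)].

End Multigraph.

(* Main.v *)
Require Import Defs.
From mathcomp Require Import all_boot zify.

Ltac slia := repeat match goal with H := _ |- _ => clearbody H end; repeat match goal with H : ?T |- _ =>
  lazymatch T with
  | is_true (leq _ _) => fail
  | @eq nat _ _ => fail
  | @eq bool (leq _ _) _ => fail
  | _ => lazymatch type of T with Prop => clear H end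
  end end; lia.

Theorem lemma5p5 (V E : finType) (end1 end2 : E -> V)
  (s t : V) (A B : {set V}) :
  loopless end1 end2 ->
  s != t ->
  s \notin A -> s \notin B -> t \notin A -> t \notin B ->
  [disjoint A & B] ->
  (forall v : V, [|| v == s, v == t, v \in A | v \in B]) ->
  induced_connected end1 end2 (A :|: B) ->
  (exists e a, a \in A /\ joins end1 end2 e s a) ->
  (exists e a, a \in A /\ joins end1 end2 e t a) ->
  (forall a, a \in A -> exists e, joins end1 end2 e a s || joins end1 end2 e a t) ->
  (forall b, b \in B -> exists a1 a2, [/\ a1 \in A, a2 \in A, a1 != a2,
        adjacent end1 end2 b a1 & adjacent end1 end2 b a2]) ->
  exists o : E -> bool, bipolar_orientation end1 end2 s t o.
Proof.
move=> Hloop Hst sA sB tA tB dAB Hcov Hconn [es [a_s [Has Hjs]]] [et [a_t [Hat Hjt]]] HA HB.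
set adj := adjacent end1 end2.
have joinsC : forall e x y, joins end1 end2 e x y = joins end1 end2 e y x.
  by move=> e x y; rewrite /joins orbC.
have adjC : forall x y, adj x y = adj y x.
  move=> x y; apply/existsP/existsP => -[e He]; exists e; by rewrite joinsC.
have adj_joins : forall e x y, joins end1 end2 e x y -> adj x y.
  by move=> e x y He; apply/existsP; exists e.
pose Inv (P : {set V}) (r : V -> nat) := [/\ s \in P, t \in P, {in P &, injective r},
   (forall v, v \in P -> r s <= r v <= r t) &
   (forall v, v \in P -> v != s -> v != t ->
      (exists2 x, x \in P & adj x v && (r x < r v)) /\
      (exists2 y, y \in P & adj v y && (r v < r y)))].
have ear : forall P r u w q, Inv P r -> u \in P -> w \in P -> r u < r w -> uniq q ->
   all (fun x => x \notin P) q -> path adj u q -> adj (last u q) w ->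
   exists r', Inv (P :|: [set x in q]) r'.
  move=> P r u w q [sP tP injr bnd nb] uP wP ruw uq nPq pq lw.
  pose r' v := if v \in q then r u + (index v q).+1 else if r u < r v then r v + size q else r v.
  have notq : forall v, v \in P -> v \notin q.
    by move=> v vP; apply/negP => vq; move/allP: nPq => /(_ v vq); rewrite vP.
  have mono : forall x y, x \in P -> y \in P -> r x < r y -> r' x < r' y.
    move=> x y xP yP; rewrite /r' (negbTE (notq x xP)) (negbTE (notq y yP)).
    move=> h; case: ifP => h1; case: ifP => h2; slia.
  have monoE : forall x y, x \in P -> y \in P -> (r' x < r' y) = (r x < r y).
    move=> x y xP yP; apply/idP/idP; last exact: mono.
    case: (ltngtP (r x) (r y)) => // h.
    - by move/(mono _ _ yP xP): h; slia.
    - by move/(injr _ _ xP yP): h => ->; slia.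
  have monoLe : forall x y, x \in P -> y \in P -> r x <= r y -> r' x <= r' y.
    move=> x y xP yP; rewrite leq_eqVlt => /orP[/eqP h|h]; first by rewrite (injr _ _ xP yP h).
    exact/ltnW/mono.
  have qidx : forall v, v \in q -> r' v = r u + (index v q).+1 by move=> v vq; rewrite /r' vq.
  have idxlt : forall v, v \in q -> index v q < size q by move=> v; rewrite index_mem.
  have oldr : forall x, x \in P -> r' x <= r u \/ r u + size q < r' x.
    move=> x xP; rewrite /r' (negbTE (notq x xP)); case: ifP => h; slia.
  have ru' : r' u = r u by rewrite /r' (negbTE (notq u uP)) ltnn.
  have rw' : r' w = r w + size q by rewrite /r' (negbTE (notq w wP)) ruw.
  exists r'; split.
  - by rewrite inE sP.
  - by rewrite inE tP.
  - move=> x y; rewrite !inE => /orP[xP|xq] /orP[yP|yq] e.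
    + case: (ltngtP (r x) (r y)) => h.
      * by move: (mono _ _ xP yP h); rewrite e ltnn.
      * by move: (mono _ _ yP xP h); rewrite e ltnn.
      * exact: injr.
    + move: (oldr x xP) (idxlt y yq); rewrite e qidx //; slia.
    + move: (oldr y yP) (idxlt x xq); rewrite -e qidx //; slia.
    + move: e; rewrite !qidx // => e.
      have ei : index x q = index y q by slia.
      by rewrite -(nth_index x xq) ei nth_index.
  - move=> v; rewrite !inE => /orP[vP|vq].
    + by move: (bnd v vP) => /andP[h1 h2]; rewrite !monoLe.
    + have sle : r' s <= r' u.
        case: (ltngtP (r s) (r u)) => h; first by rewrite ltnW // mono.
        * by move: (bnd u uP); slia.
        * by rewrite (injr _ _ sP uP h).
      have tge : r' w <= r' t.
        case: (ltngtP (r w) (r t)) => h; first by rewrite ltnW // mono.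
        * by move: (bnd w wP); slia.
        * by rewrite (injr _ _ wP tP h).
      move: (idxlt v vq); rewrite (qidx v vq); slia.
  - move=> v; rewrite !inE => /orP[vP|vq] vs vt.
    + have [[x xP /andP[ax rx]] [y yP /andP[ay ry]]] := nb v vP vs vt.
      split; [exists x | exists y]; rewrite ?inE ?xP ?yP //=.
      * by rewrite ax mono.
      * by rewrite ay mono.
    + have iq := idxlt v vq.
      have ev := nth_index u vq.
      move/(pathP u): pq => pq.
      split.
      * exists (nth u (u :: q) (index v q)).
          case: (index v q) iq => [|j] /= jq; first by rewrite inE uP.
          by rewrite !inE; apply/orP; right; apply: mem_nth; exact: ltnW.
        have a0 := pq (index v q) iq; rewrite ev in a0; rewrite a0 /=.
        case: (index v q) iq (qidx v vq) => [|j] /= jq ->; first by rewrite ru'; slia.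
        have jq' : j < size q by exact: ltnW.
        rewrite (qidx _ (mem_nth u jq')) (index_uniq u jq' uq); slia.
      * case: (ltnP (index v q).+1 (size q)) => hi.
        - exists (nth u q (index v q).+1); first by rewrite !inE mem_nth ?orbT.
          move: (pq _ hi); rewrite /= ev => ->.
          rewrite (qidx _ (mem_nth u hi)) (index_uniq u hi uq) (qidx v vq); slia.
        - exists w; first by rewrite inE wP.
          have lv : last u q = v.
            have eSq : size q = (index v q).+1 by apply/eqP; rewrite eqn_leq hi iq.
            by rewrite (last_nth u) eSq /= ev.
          have avw : adj v w by rewrite -lv.
          rewrite avw rw' (qidx v vq) /= -addSn; exact: leq_add ruw iq.
have ear1 : forall P r u w v, Inv P r -> u \in P -> w \in P -> u != w -> v \notin P ->
    adj u v -> adj v w -> exists r', Inv (P :|: [set x in [:: v]]) r'.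
  move=> P r u w v IP uP wP uw vP uv vw.
  have injr : {in P &, injective r} by case: IP.
  case: (ltngtP (r u) (r w)) => h.
  - by apply: (ear P r u w); rewrite //= ?vP ?uv ?vw.
  - have [r' Ir'] : exists r', Inv (P :|: [set x in [:: v]]) r'.
      by apply: (ear P r w u) => //=; rewrite ?vP ?andbT ?(adjC w v) ?(adjC v u) ?uv ?vw.
    by exists r'.
  - by move: uw; rewrite (injr _ _ uP wP h) eqxx.
have ear2 : forall P r u w v a, Inv P r -> u \in P -> w \in P -> u != w -> v \notin P ->
    a \notin P -> v != a ->
    adj u v -> adj v a -> adj a w -> exists r', Inv (P :|: [set x in [:: v; a]]) r'.
  move=> P r u w v a IP uP wP uw vP aP va uv vaa aw.
  have injr : {in P &, injective r} by case: IP.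
  case: (ltngtP (r u) (r w)) => h.
  - by apply: (ear P r u w); rewrite //= ?vP ?aP ?uv ?vaa ?aw ?inE ?va.
  - have [r' Ir'] : exists r', Inv (P :|: [set x in [:: a; v]]) r'.
      apply: (ear P r w u) => //=; rewrite ?inE ?vP ?aP ?andbT ?(adjC w a) ?(adjC a v) ?(adjC v u) ?aw ?vaa ?uv //.
      by rewrite eq_sym.
    exists r'; congr Inv: Ir'; apply/setP => x; rewrite !inE; by case: (x == v); case: (x == a).
  - by move: uw; rewrite (injr _ _ uP wP h) eqxx.
have Hts : t != s by rewrite eq_sym.
have notH : forall x, x \in A :|: B -> (x != s) && (x != t).
  move=> x; rewrite inE; apply: contraTT; rewrite negb_and !negbK => /orP[]/eqP->;
  by rewrite ?(negbTE sA) ?(negbTE sB) ?(negbTE tA) ?(negbTE tB).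
have toST : forall a, a \in A -> exists2 x, (x == s) || (x == t) & adj a x.
  move=> a aA; have [e /orP[j|j]] := HA a aA.
  - by exists s; rewrite ?eqxx //; apply: adj_joins j.
  - by exists t; rewrite ?eqxx ?orbT //; apply: adj_joins j.
have cross : forall (e : rel V) (P : {set V}) x y, connect e x y -> x \in P -> y \notin P ->
    exists a b, [/\ e a b, a \in P & b \notin P].
  move=> e P x y /connectP[p pp ->] {y}; elim: p x pp => [|z p IH] x /=; first by move=> _ ->.
  move=> /andP[exz pp] xP lP; case zP: (z \in P); first exact: IH zP lP.
  by exists x, z; rewrite zP.
have step : forall P r, Inv P r -> (exists2 h, h \in P & h \in A :|: B) -> P != setT ->
    exists P' r', [/\ Inv P' r', P \subset P' & #|~: P'| < #|~: P|].
  move=> P r IP [h hP hH] nT.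
  have [sP tP _ _ _] := IP.
  have [v vP] : exists v, v \notin P.
    have : ~: P != set0 by apply: contra nT => /eqP e; rewrite -[P]setCK e setC0.
    by case/set0Pn => v; rewrite inE => vP; exists v.
  have vH : v \in A :|: B.
    move: (Hcov v); rewrite inE; case: eqP => [ev|_]; first by move: vP; rewrite ev sP.
    by case: eqP => [ev|_] //; move: vP; rewrite ev tP.
  have [u [v' [/and3P[uH v'H auv] uP v'P]]] := cross _ P h v (Hconn h v hH vH) hP vP.
  suff [P' [r' [IP' sub v'in]]] : exists P' r', [/\ Inv P' r', P \subset P' & v' \in P'].
    exists P', r'; split => //; apply: proper_card; apply/properP; split; first by rewrite setCS.
    by exists v'; rewrite inE ?v'P ?v'in.
  have xP : forall x, (x == s) || (x == t) -> x \in P by move=> x /orP[]/eqP->.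
  have ux : forall x, (x == s) || (x == t) -> u != x.
    move=> x hx; apply: contraTneq hx => <-; by rewrite negb_or notH.
  move: v'H; rewrite inE => /orP[v'A|v'B].
  - have [x hx v'x] := toST v' v'A.
    have [r' Ir'] := ear1 P r u x v' IP uP (xP x hx) (ux x hx) v'P auv v'x.
    by exists (P :|: [set y in [:: v']]), r'; rewrite subsetUl !inE eqxx orbT.
  - have [a [aA ava au]] : exists a, [/\ a \in A, adj v' a & a != u].
      have [a1 [a2 [a1A a2A a12 va1 va2]]] := HB v' v'B.
      case: (eqVneq a1 u) => [e1|n1]; last by exists a1.
      by exists a2; split => //; rewrite -e1 eq_sym.
    have v'a : v' != a.
      apply: contraTneq aA => <-; move: dAB; rewrite disjoint_sym disjoints_subset => /subsetP/(_ v' v'B).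
      by rewrite inE.
    case aP: (a \in P).
    + have ua : u != a by rewrite eq_sym.
      have [r' Ir'] := ear1 P r u a v' IP uP aP ua v'P auv ava.
      by exists (P :|: [set y in [:: v']]), r'; rewrite subsetUl !inE eqxx orbT.
    + have [x hx ax] := toST a aA.
      have [r' Ir'] := ear2 P r u x v' a IP uP (xP x hx) (ux x hx) v'P (negbT aP) v'a auv ava ax.
      by exists (P :|: [set y in [:: v'; a]]), r'; rewrite subsetUl !inE eqxx orbT.
have loop : forall n P r, #|~: P| <= n -> Inv P r -> (exists2 h, h \in P & h \in A :|: B) ->
    exists r', Inv [set: V] r'.
  elim=> [|n IH] P r cP IP hP; (case: (eqVneq P setT) => [eT|nT]; first by exists r; rewrite -eT).
  - have [P' [r' [_ _ lt]]] := step P r IP hP nT.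
    by move: (leq_trans lt cP).
  - have [P' [r' [IP' sub lt]]] := step P r IP hP nT.
    apply: (IH P' r'); first by rewrite -ltnS (leq_trans lt cP).
      by [].
    by case: hP => h hP hH; exists h => //; apply: (subsetP sub).
pose r0 := fun v : V => if v == s then 0 else 1.
have I0 : Inv [set s; t] r0.
  split; rewrite ?inE ?eqxx ?orbT //.
  - move=> x y; rewrite !inE /r0 => /orP[]/eqP-> /orP[]/eqP->; rewrite ?eqxx ?(negbTE Hst) ?(negbTE Hts) //.
  - by move=> v _; rewrite /r0 eqxx (negbTE Hts); case: (v == s).
  - by move=> v; rewrite !inE => /orP[]->.
have [p0 pp0 lp0] : exists2 p, path (induced_adj end1 end2 (A :|: B)) a_s p & a_t = last a_s p.
  by apply/connectP; apply: Hconn; rewrite inE ?Has ?Hat.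
move: lp0; case: (shortenP pp0) => p' pp' up' _ lp'.
have allH : forall x q, path (induced_adj end1 end2 (A :|: B)) x q -> all (fun y => y \in A :|: B) q.
  move=> x q; elim: q x => //= y q IH x /andP[/and3P[_ yS _] pq]; by rewrite yS (IH y pq).
have [r1 I1] : exists r, Inv ([set s; t] :|: [set x in a_s :: p']) r.
  apply: (ear [set s; t] r0 s t (a_s :: p')) => //.
  - by rewrite !inE eqxx.
  - by rewrite !inE eqxx orbT.
  - by rewrite /r0 eqxx (negbTE Hts).
  - apply/allP => x; rewrite inE => /orP[/eqP->|xp].
      by move: (notH a_s); rewrite !inE Has /= => /(_ isT) /andP[/negbTE-> /negbTE->].
    have xH : x \in A :|: B by move/allP: (allH _ _ pp') => /(_ x xp).
    by move: (notH x xH) => /andP[/negbTE h1 /negbTE h2]; rewrite !inE h1 h2.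
  - rewrite /= (adj_joins _ _ _ Hjs) /=.
    by apply: sub_path pp' => a b /and3P[_ _ h].
  - by rewrite /= -lp' adjC (adj_joins _ _ _ Hjt).
have [rf If] : exists r', Inv [set: V] r'.
  apply: (loop _ _ r1 (leqnn _) I1); exists a_s; by rewrite !inE ?eqxx ?orbT ?Has.
have [_ _ injf bndf nbf] := If.
have injT : forall x y, rf x = rf y -> x = y by move=> x y; apply: injf; rewrite inE.
pose o := fun e => rf (end1 e) < rf (end2 e).
exists o.
have ne : forall e, rf (end1 e) != rf (end2 e).
  by move=> e; apply/eqP => h; move: (Hloop e); rewrite (injT _ _ h) eqxx.
have tl : forall e, rf (Defs.tail end1 end2 o e) < rf (Defs.head end1 end2 o e).
  move=> e; rewrite /Defs.tail /Defs.head /o; move: (ne e).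
  by case: (ltngtP (rf (end1 e)) (rf (end2 e))) => // ->; rewrite eqxx.
have arcr : forall x y, Defs.arc end1 end2 o x y -> rf x < rf y.
  by move=> x y /existsP[e /andP[/eqP<- /eqP<-]]; exact: tl.
have bnd' : forall v, rf s <= rf v <= rf t by move=> v; apply: bndf; rewrite inE.
have inarc : forall x v, adj x v -> rf x < rf v -> ~ is_source end1 end2 o v.
  move=> x0 v0 /existsP[e /orP[]/andP[/eqP e1 /eqP e2]] h src; move: (src e);
  rewrite /Defs.head /o e1 e2; first by rewrite h eqxx.
  by rewrite ltnNge (ltnW h) /= eqxx.
have outarc : forall v y, adj v y -> rf v < rf y -> ~ is_sink end1 end2 o v.
  move=> v0 y0 /existsP[e /orP[]/andP[/eqP e1 /eqP e2]] h snk; move: (snk e);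
  rewrite /Defs.tail /o e1 e2; first by rewrite h eqxx.
  by rewrite ltnNge (ltnW h) /= eqxx.
have lt_of : forall x y, rf x <= rf y -> x != y -> rf x < rf y.
  move=> x y h nxy; rewrite ltn_neqAle h andbT; apply: contra nxy => /eqP h'; apply/eqP; exact: injT.
have atH : a_t != t by apply: contraTneq Hat => ->.
have asH : s != a_s by apply: contraTneq Has => <-.
split.
- move=> x y axy; apply/negP => /connectP[p pp ey].
  have : rf y <= rf (last y p).
    elim: p y pp {ey axy} => //= z p IH y /andP[ayz pp].
    exact: leq_trans (ltnW (arcr _ _ ayz)) (IH _ pp).
  by rewrite -ey leqNgt (arcr _ _ axy).
- move=> e; apply/eqP => hs; move: (tl e); rewrite hs.
  by move: (bnd' (Defs.tail end1 end2 o e)) => /andP[h _]; rewrite ltnNge h.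
- move=> v src; apply/eqP; apply: contraPT src => vs.
  case: (eqVneq v t) => [->|vt].
  + apply: (inarc a_t); first by rewrite adjC (adj_joins _ _ _ Hjt).
    by apply: lt_of; [case/andP: (bnd' a_t) | ].
  + by have [[x _ /andP[ax rx]] _] := nbf v (in_setT v) vs vt; apply: (inarc x).
- move=> e; apply/eqP => ht; move: (tl e); rewrite ht.
  by move: (bnd' (Defs.head end1 end2 o e)) => /andP[_ h]; rewrite ltnNge h.
- move=> v snk; apply/eqP; apply: contraPT snk => vt.
  case: (eqVneq v s) => [->|vs].
  + apply: (outarc _ a_s); first by rewrite (adj_joins _ _ _ Hjs).
    by apply: lt_of; [case/andP: (bnd' a_s) | ].
  + by have [_ [y _ /andP[ay ry]]] := nbf v (in_setT v) vs vt; apply: (outarc _ y).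
Qed.
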